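(* Let $F$ be a DQCNF. Applying autarky-reduction steps to $F$ as long as possible, in any order, yields the largest lean sub-DQCNF (the lean kernel) of $F$.
   Context: A DQCNF $F$ consists of a set $X$ of universal variables, a set $Y$ of existential variables, a dependency set $D_y\subseteq X$ for each $y\in Y$, and a matrix, a finite set of clauses over $X\cup Y$. An autarky for $F$ is a partial map $\varphi$ from a subset $\mathrm{dom}(\varphi)\subseteq Y$ to Boolean functions, where $\varphi(y)$ depends only on variables in $D_y$, such that every clause $C$ of $F$ either contains no variable of $\mathrm{dom}(\varphi)$ (then $\varphi$ does not touch $C$), or becomes a tautology (identically true as a function of all remaining variables) after substituting $\varphi(y)$ for each $y\in\mathrm{dom}(\varphi)$ occurring in $C$. An autarky is trivial if it touches no clause. $F$ is lean if it has no non-trivial autarky. A sub-DQCNF of $F$ is a DQCNF with the same variables and dependency sets whose matrix is a subset of the matrix of $F$; the lean kernel of $F$ is its largest lean sub-DQCNF (w.r.t. inclusion of clause sets). $F[\varphi]$ denotes the DQCNF with the same variables and dependency sets as $F$ whose matrix consists of the clauses of $F$ not touched by $\varphi$. An autarky-reduction step replaces a DQCNF $G$ by $G[\varphi]$ for some non-trivial autarky $\varphi$ of $G$. *)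

(* Defs.v *)
From mathcomp Require Import all_boot.
From Stdlib Require Import Relations.
Set Implicit Arguments. Unset Strict Implicit. Unset Printing Implicit Defensive.

(* Universal variables: finite type [U]; existential variables: finite type [E].
   Variables are [U + E]; a literal is (variable, polarity) where polarity
   [true] means the positive literal. *)
Section DQCNF.
Variables U E : finType.

Definition var := (U + E)%type.
Definition lit := (var * bool)%type.
Definition clause := {set lit}.

Record dqcnf := DQCNF {
  dep : {ffun E -> {set U}};
  matrix : {set clause} }.

Definition uassign := U -> bool.

Definition depends_only (D : {set U}) (f : uassign -> bool) : Prop :=
  forall a b : uassign, (forall u, u \in D -> a u = b u) -> f a = f b.

(* A partial map is given by its domain [dom] and values [phi]
   (values outside [dom] are irrelevant). *)
Definition touches (dom : {set E}) (C : clause) : bool :=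
  [exists l in C, if l.1 is inr y then y \in dom else false].

Definition taut_after (dom : {set E}) (phi : E -> uassign -> bool)
    (C : clause) : Prop :=
  forall (a : uassign) (b : E -> bool),
    exists2 l, l \in C &
      (match l.1 with
       | inl u => a u
       | inr y => if y \in dom then phi y a else b y
       end) = l.2.

Definition autarky (F : dqcnf) (dom : {set E}) (phi : E -> uassign -> bool)
  : Prop :=
  (forall y, y \in dom -> depends_only (dep F y) (phi y)) /\
  (forall C, C \in matrix F -> touches dom C -> taut_after dom phi C).

Definition trivial_aut (F : dqcnf) (dom : {set E}) : Prop :=
  forall C, C \in matrix F -> ~~ touches dom C.

Definition lean (F : dqcnf) : Prop :=
  forall dom phi, autarky F dom phi -> trivial_aut F dom.

Definition subdq (G F : dqcnf) : Prop :=
  dep G = dep F /\ matrix G \subset matrix F.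

Definition apply_aut (F : dqcnf) (dom : {set E}) : dqcnf :=
  DQCNF (dep F) [set C in matrix F | ~~ touches dom C].

Definition red_step (G H : dqcnf) : Prop :=
  exists dom phi, autarky G dom phi /\ ~ trivial_aut G dom /\
                  H = apply_aut G dom.

Definition is_lean_kernel (F K : dqcnf) : Prop :=
  subdq K F /\ lean K /\ (forall H, subdq H F -> lean H -> subdq H K).

End DQCNF.

(* Main.v *)
Require Import Defs.
From mathcomp Require Import all_boot.
From Stdlib Require Import Relations Classical.

Section S.
Variables U E : finType.

Definition Inv (F X : dqcnf U E) : Prop :=
  dep X = dep F /\ matrix X \subset matrix F /\
  (forall H, subdq H F -> lean H -> matrix H \subset matrix X).

Lemma inv_step (F X Y : dqcnf U E) : red_step X Y -> Inv F X -> Inv F Y.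
Proof.
move=> [dom [phi [[Hdep Htaut] [_ ->]]]] [dX [sX kX]].
split; first by [].
split.
  apply/subsetP=> C; rewrite inE => /andP [CX _]; exact: (subsetP sX).
move=> H [dH sH] lH.
have sHX := kX H (conj dH sH) lH.
have aH : autarky H dom phi.
  split.
    by move=> y /Hdep; rewrite dH -dX.
  by move=> C CH; apply: Htaut; exact: (subsetP sHX).
have tH := lH dom phi aH.
apply/subsetP=> C CH; rewrite /apply_aut inE /=.
by rewrite (subsetP sHX _ CH) (tH C CH).
Qed.

Lemma inv_rt (F X Y : dqcnf U E) :
  clos_refl_trans (dqcnf U E) (@red_step U E) X Y -> Inv F X -> Inv F Y.
Proof.
elim=> {X Y} [X Y st|X|X Y Z _ IH1 _ IH2]; first exact: inv_step.
- by [].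
- by move=> h; apply: IH2; apply: IH1.
Qed.
End S.

Theorem lemma4 (U E : finType) (F G : dqcnf U E) :
  clos_refl_trans (dqcnf U E) (@red_step U E) F G ->
  (forall H, ~ red_step G H) ->
  is_lean_kernel F G.
Proof.
move=> rt nst.
have I0 : @Inv U E F F.
  split; first by [].
  split; first exact: subxx.
  by move=> H [_ s] _.
have [dG [sG kG]] := @inv_rt U E F F G rt I0.
split; first by split.
split.
  move=> dom phi aut.
  apply: NNPP => nt.
  by apply: (nst (apply_aut G dom)); exists dom, phi.
move=> H sH lH; split; last exact: kG.
by case: sH => -> _.
Qed.
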